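(* Let $\mathfrak{C}$ be a category and $\mathbb{K}$ a field. A map $\rho : \mathfrak{C} \times \mathfrak{C} \to \mathbb{K}$ is a factor set for some projective representation of $\mathfrak{C}$ if and only if $$\rho(x,y)\rho(xy,z) = \rho(x,yz)\rho(y,z)\quad\text{and}\quad \big(\rho(x,y) = 0 \iff \rho(r(x),xy) = 0\big)$$ for all $(x,y,z) \in \mathfrak{C}^3$.
   Context: A semigroupoid is a set with a partially defined associative binary operation; we write $\exists xy$ when $xy$ is defined. A category is a semigroupoid in which every $x$ has unique identities $r(x),d(x)$ with $\exists r(x)x$, $\exists xd(x)$ (and $r(x)x=x=xd(x)$); $\exists xy$ iff $d(x)=r(y)$. $\mathfrak{C}^2$, $\mathfrak{C}^3$ denote composable pairs and triples. A $\mathbb{K}$-semigroup is a semigroup $S$ with zero and a map $\mathbb{K}\times S\to S$ with $\alpha(\beta x)=(\alpha\beta)x$, $1x=x$, $\alpha(xy)=(\alpha x)y=x(\alpha y)$ and $0_{\mathbb{K}}x=0_S$; it is $\mathbb{K}$-cancellative if $\alpha x=\beta x$ with $x\ne0$ implies $\alpha=\beta$. A projective representation of a semigroupoid $\mathfrak{C}$ on a $\mathbb{K}$-cancellative semigroup $S$ is a map $\Gamma:\mathfrak{C}\to S$ such that (i) if $\exists xy$ then $\Gamma(xy)=0\iff\Gamma(x)\Gamma(y)=0$, and if $xy$ is not defined then $\Gamma(x)\Gamma(y)=0$; (ii) there is $\rho$ with $\Gamma(x)\Gamma(y)=\Gamma(xy)\rho(x,y)$, $\rho(x,y)\in\mathbb{K}^*$,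 whenever $\exists xy$ and $\Gamma(xy)\ne0$. The factor set of $\Gamma$ is this (unique) $\rho$, extended to all of $\mathfrak{C}\times\mathfrak{C}$ by $\rho(x,y)=0$ when $xy$ is not defined or $\Gamma(xy)=0$. *)

(* Defs.v *)
From mathcomp Require Import all_boot all_algebra.
Set Implicit Arguments. Unset Strict Implicit. Unset Printing Implicit Defensive.
Import GRing.Theory.
Local Open Scope ring_scope.

(* A semigroupoid: a set with a partially defined associative product.
   [sdef x y] means "xy is defined" (written ∃xy in the paper);
   [smul x y] is the product, meaningful only when [sdef x y]. *)
Record semigroupoid := Semigroupoid {
  sg_carrier :> Type;
  sdef : sg_carrier -> sg_carrier -> Prop;
  smul : sg_carrier -> sg_carrier -> sg_carrier;
  sdef_assoc1 : forall x y z,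
    (sdef x y /\ sdef (smul x y) z) <-> (sdef y z /\ sdef x (smul y z));
  sdef_assoc2 : forall x y z,
    (sdef y z /\ sdef x (smul y z)) <-> (sdef x y /\ sdef y z);
  smulA : forall x y z, sdef x y -> sdef y z ->
    smul (smul x y) z = smul x (smul y z)
}.

Definition is_identity (S : semigroupoid) (e : S) : Prop :=
  forall y : S, (sdef e y -> smul e y = y) /\ (sdef y e -> smul y e = y).

Record category := Category {
  cat_sg :> semigroupoid;
  cr : cat_sg -> cat_sg;
  cd : cat_sg -> cat_sg;
  cr_id : forall x, is_identity (cr x);
  cr_def : forall x, sdef (cr x) x;
  cr_uniq : forall x e, is_identity e -> sdef e x -> e = cr x;
  cd_id : forall x, is_identity (cd x);
  cd_def : forall x, sdef x (cd x);
  cd_uniq : forall x e, is_identity e -> sdef x e -> e = cd x;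
  sdef_iff : forall x y, sdef x y <-> cd x = cr y
}.

Record Ksemigroup (K : fieldType) := KSemigroup {
  ks_carrier :> Type;
  kmul : ks_carrier -> ks_carrier -> ks_carrier;
  kzero : ks_carrier;
  kscale : K -> ks_carrier -> ks_carrier;
  kmulA : forall x y z, kmul (kmul x y) z = kmul x (kmul y z);
  kmul0s : forall x, kmul kzero x = kzero;
  kmuls0 : forall x, kmul x kzero = kzero;
  kscaleA : forall (a b : K) x, kscale a (kscale b x) = kscale (a * b) x;
  kscale1 : forall x, kscale 1 x = x;
  kscale_mull : forall (a : K) x y, kscale a (kmul x y) = kmul (kscale a x) y;
  kscale_mulr : forall (a : K) x y, kscale a (kmul x y) = kmul x (kscale a y);
  kscale0 : forall x, kscale 0 x = kzero
}.

Definition Kcancellative (K : fieldType) (S : Ksemigroup K) : Prop :=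
  forall (a b : K) (x : S), x <> kzero S -> kscale a x = kscale b x -> a = b.

Definition proj_rep (K : fieldType) (C : semigroupoid) (S : Ksemigroup K)
  (G : C -> S) : Prop :=
  (forall x y, sdef x y -> (G (smul x y) = kzero S <-> kmul (G x) (G y) = kzero S))
  /\ (forall x y, ~ sdef x y -> kmul (G x) (G y) = kzero S)
  /\ exists rho : C -> C -> K, forall x y, sdef x y -> G (smul x y) <> kzero S ->
       kmul (G x) (G y) = kscale (rho x y) (G (smul x y)) /\ rho x y != 0.

(* [rho] is the factor set of G (extended by 0 outside the pairs (x,y)
   with xy defined and G(xy) <> 0). *)
Definition factor_set_of (K : fieldType) (C : semigroupoid) (S : Ksemigroup K)
  (G : C -> S) (rho : C -> C -> K) : Prop :=
  forall x y,
    (sdef x y /\ G (smul x y) <> kzero S ->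
       kmul (G x) (G y) = kscale (rho x y) (G (smul x y)) /\ rho x y != 0)
    /\ (~ (sdef x y /\ G (smul x y) <> kzero S) -> rho x y = 0).

Definition is_factor_set (K : fieldType) (C : semigroupoid) (rho : C -> C -> K)
  : Prop :=
  exists (S : Ksemigroup K) (G : C -> S),
    Kcancellative S /\ proj_rep G /\ factor_set_of G rho.

(* Main.v *)
Require Import Defs.
From mathcomp Require Import all_boot all_algebra.
From mathcomp Require Import ring.
From Stdlib Require Import Classical.
Import GRing.Theory.
Local Open Scope ring_scope.

Set Implicit Arguments. Unset Strict Implicit.

Lemma def_cr_mul (C : category) (x y : C) : sdef x y -> sdef (cr x) (smul x y).
Proof. move=> h. by case: ((sdef_assoc2 (cr x) x y).2 (conj (cr_def x) h)). Qed.

Lemma cr_mul (C : category) (x y : C) : sdef x y -> smul (cr x) (smul x y) = smul x y.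
Proof. move=> h. rewrite -(smulA (cr_def x) h). by rewrite ((cr_id x) x).1 //; exact: cr_def. Qed.

Lemma cr_mulE (C : category) (x y : C) : sdef x y -> cr (smul x y) = cr x.
Proof. move=> h. symmetry; apply: cr_uniq; [exact: cr_id | exact: def_cr_mul]. Qed.

Lemma chain1 (C : semigroupoid) (x y z : C) : sdef x y -> sdef (smul x y) z -> sdef y z.
Proof. move=> h1 h2. by case: ((sdef_assoc1 x y z).1 (conj h1 h2)). Qed.

Lemma chain2 (C : semigroupoid) (x y z : C) : sdef y z -> sdef x (smul y z) -> sdef x y.
Proof. move=> h1 h2. by case: ((sdef_assoc2 x y z).1 (conj h1 h2)). Qed.

Lemma defL (C : semigroupoid) (x y z : C) : sdef x y -> sdef y z -> sdef (smul x y) z.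
Proof.
move=> h1 h2. have [h3 h4] := (sdef_assoc2 x y z).2 (conj h1 h2).
by case: ((sdef_assoc1 x y z).2 (conj h3 h4)).
Qed.

Lemma defR (C : semigroupoid) (x y z : C) : sdef x y -> sdef y z -> sdef x (smul y z).
Proof. move=> h1 h2. by case: ((sdef_assoc2 x y z).2 (conj h1 h2)). Qed.

Lemma fwd (C : category) (K : fieldType) (rho : C -> C -> K) :
  is_factor_set rho ->
  (forall x y z : C, sdef x y -> sdef y z ->
     rho x y * rho (smul x y) z = rho x (smul y z) * rho y z
     /\ (rho x y = 0 <-> rho (cr x) (smul x y) = 0)).
Proof.
case=> S [G [canc [[pa [pb _]] fs]]] x y z hxy hyz.
have hxy_z := defL hxy hyz; have hx_yz := defR hxy hyz.
have eA := smulA hxy hyz.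
have fsnz : forall a b, sdef a b -> G (smul a b) <> kzero S ->
   kmul (G a) (G b) = kscale (rho a b) (G (smul a b)) /\ rho a b != 0.
  by move=> a b hab hG; apply: (fs a b).1.
have fsz : forall a b, G (smul a b) = kzero S -> rho a b = 0.
  by move=> a b hG; apply: (fs a b).2 => -[_ []].
split.
  case: (classic (G (smul (smul x y) z) = kzero S)) => hw.
    rewrite (fsz _ _ hw) mulr0.
    by rewrite eA in hw; rewrite (fsz _ _ hw) mul0r.
  have h1 : G (smul x y) <> kzero S.
    move=> h; apply: hw; apply/(pa _ _ hxy_z).2; by rewrite h kmul0s.
  have h2 : G (smul y z) <> kzero S.
    move=> h; apply: hw; rewrite eA; apply/(pa _ _ hx_yz).2; by rewrite h kmuls0.
  have hw' : G (smul x (smul y z)) <> kzero S by rewrite -eA.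
  have [e1 _] := fsnz _ _ hxy h1.
  have [e2 _] := fsnz _ _ hxy_z hw.
  have [e3 _] := fsnz _ _ hyz h2.
  have [e4 _] := fsnz _ _ hx_yz hw'.
  have := kmulA (G x) (G y) (G z).
  rewrite e1 e3 -kscale_mull -kscale_mulr e2 e4 !kscaleA -eA => e.
  rewrite [X in _ = X]mulrC. exact: (canc _ _ _ hw e).
have hd := def_cr_mul hxy; have hm := cr_mul hxy.
case: (classic (G (smul x y) = kzero S)) => hG.
  split=> _; first by rewrite fsz // hm.
  exact: fsz.
have [_ n1] := fsnz _ _ hxy hG.
have hG' : G (smul (cr x) (smul x y)) <> kzero S by rewrite hm.
have [_ n2] := fsnz _ _ hd hG'.
by split=> h; [move: n1; rewrite h eqxx | move: n2; rewrite h eqxx].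
Qed.

Definition E (K : fieldType) (C : Type) := option {p : K * C | p.1 != 0}.

Definition mk (K : fieldType) (C : Type) (c : K) (z : C) : E K C :=
  (if c != 0 as b return (c != 0) = b -> E K C
   then fun h => Some (exist (fun p : K * C => p.1 != 0) (c, z) h)
   else fun _ => None) erefl.

Definition dn (K : fieldType) (C : Type) (u : E K C) : option (K * C) :=
  omap (@sval _ _) u.

Lemma dn_inj (K : fieldType) (C : Type) : injective (@dn K C).
Proof.
case=> [[p hp]|] [[q hq]|] //= [e]. subst q. by rewrite (eq_irrelevance hp hq).
Qed.

Lemma dn_mk (K : fieldType) (C : Type) (c : K) (z : C) :
  dn (mk c z) = if c == 0 then None else Some (c, z).
Proof.
rewrite /mk; move: (@erefl _ (c != 0)).
case: {2 3}(c != 0) => h /=; first by rewrite -[c == 0]negbK h.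
by rewrite -[c == 0]negbK h.
Qed.

Definition tmul (K : fieldType) (C : semigroupoid) (rho : C -> C -> K)
  (u v : E K C) : E K C :=
  match u, v with
  | Some p, Some q => mk ((sval p).1 * (sval q).1 * rho (sval p).2 (sval q).2)
                         (smul (sval p).2 (sval q).2)
  | _, _ => None
  end.

Definition tscale (K : fieldType) (C : Type) (a : K) (u : E K C) : E K C :=
  match u with
  | Some p => mk (a * (sval p).1) (sval p).2
  | None => None
  end.

Lemma dn_tmul (K : fieldType) (C : semigroupoid) (rho : C -> C -> K) u v :
  dn (tmul rho u v) = match dn u, dn v with
   | Some (a, x), Some (b, y) =>
      if a * b * rho x y == 0 then None else Some (a * b * rho x y, smul x y)
   | _, _ => None end.
Proof. case: u => [[[a x] ha]|]; case: v => [[[b y] hb]|] //=; exact: dn_mk. Qed.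

Lemma dn_tscale (K : fieldType) (C : Type) (a : K) (u : E K C) :
  dn (tscale a u) = match dn u with
   | Some (b, x) => if a * b == 0 then None else Some (a * b, x)
   | None => None end.
Proof. case: u => [[[b x] hb]|] //=; exact: dn_mk. Qed.

Lemma dn_some (K : fieldType) (C : Type) (u : E K C) :
  dn u = None \/ exists (a : K) (x : C), a != 0 /\ dn u = Some (a, x).
Proof. case: u => [[[a x] ha]|] /=; [right; by exists a, x | by left]. Qed.

Lemma dn_none (K : fieldType) (C : Type) (u : E K C) : dn u = None -> u = None.
Proof. by case: u. Qed.


Definition Hyp (C : category) (K : fieldType) (rho : C -> C -> K) :=
  forall x y z : C, sdef x y -> sdef y z ->
     rho x y * rho (smul x y) z = rho x (smul y z) * rho y z
     /\ (rho x y = 0 <-> rho (cr x) (smul x y) = 0).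

Definition Out (C : category) (K : fieldType) (rho : C -> C -> K) :=
  forall x y : C, ~ sdef x y -> rho x y = 0.

Lemma key (C : category) (K : fieldType) (rho : C -> C -> K)
  (ro : Out rho) (H : Hyp rho) (x y z : C) :
  rho x y * rho (smul x y) z = rho x (smul y z) * rho y z.
Proof.
case: (classic (sdef x y /\ sdef y z)) => [[h1 h2]|hn]; first exact: (H x y z h1 h2).1.
have -> : rho x y * rho (smul x y) z = 0.
  case: (classic (sdef x y)) => h1; last by rewrite ro // mul0r.
  rewrite [rho (smul x y) z]ro ?mulr0 // => h2; apply: hn; split=> //; exact: chain1 h2.
case: (classic (sdef y z)) => h2; last by rewrite [rho y z]ro // mulr0.
rewrite [rho x (smul y z)]ro ?mul0r // => h3; apply: hn; split=> //; exact: chain2 h3.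
Qed.

Lemma def_of_nz (C : category) (K : fieldType) (rho : C -> C -> K)
  (ro : Out rho) (x y : C) : rho x y != 0 -> sdef x y.
Proof. move=> hne; apply: NNPP => hn; move: hne; by rewrite ro // eqxx. Qed.

Lemma smul_eq (C : category) (K : fieldType) (rho : C -> C -> K)
  (ro : Out rho) (x y z : C) :
  rho x y * rho (smul x y) z != 0 -> smul (smul x y) z = smul x (smul y z).
Proof.
rewrite mulf_eq0 negb_or => /andP [h1 h2].
have d1 := def_of_nz ro h1; have d2 := def_of_nz ro h2.
exact: smulA d1 (chain1 d1 d2).
Qed.

Lemma tmulA (C : category) (K : fieldType) (rho : C -> C -> K)
  (ro : Out rho) (H : Hyp rho) (u v w : E K C) :
  tmul rho (tmul rho u v) w = tmul rho u (tmul rho v w).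
Proof.
apply: dn_inj; rewrite !dn_tmul.
case: (dn_some u) => [->|[a [x [ha ->]]]] //.
case: (dn_some v) => [->|[b [y [hb ->]]]] //=.
case: (dn_some w) => [->|[c [z [hc ->]]]] //=; try by case: ifP.
have E1 : a * (b * c * rho y z) * rho x (smul y z)
          = a * b * rho x y * c * rho (smul x y) z.
  transitivity (a * b * c * (rho x (smul y z) * rho y z)); first by ring.
  rewrite -(key ro H); ring.
have [h1|h1] := eqVneq (a * b * rho x y) 0;
  have [h2|h2] := eqVneq (b * c * rho y z) 0 => //=.
- by rewrite E1 h1 !mul0r eqxx.
- by rewrite -E1 h2 mulr0 mul0r eqxx.
rewrite E1; case: eqP => //= h3; rewrite (smul_eq ro) //.
apply/eqP => h; apply: h3.
transitivity (a * b * c * (rho x y * rho (smul x y) z)); first by ring.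
by rewrite h mulr0.
Qed.

Lemma tscaleA (K : fieldType) (C : Type) (a b : K) (u : E K C) :
  tscale a (tscale b u) = tscale (a * b) u.
Proof.
apply: dn_inj; rewrite !dn_tscale.
case: (dn_some u) => [->|[c [x [hc ->]]]] //.
case: eqP => h /=; first by rewrite -mulrA h mulr0 eqxx.
by rewrite mulrA.
Qed.

Lemma tscale1 (K : fieldType) (C : Type) (u : E K C) : tscale 1 u = u.
Proof.
apply: dn_inj; rewrite !dn_tscale.
case: (dn_some u) => [->|[c [x [hc ->]]]] //.
by rewrite mul1r (negbTE hc).
Qed.

Lemma tscale_mull (K : fieldType) (C : semigroupoid) (rho : C -> C -> K) a u v :
  tscale a (tmul rho u v) = tmul rho (tscale a u) v.
Proof.
apply: dn_inj; rewrite dn_tscale !dn_tmul dn_tscale.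
case: (dn_some u) => [->|[b [x [hb ->]]]] //.
case: (dn_some v) => [->|[c [y [hc ->]]]] //=; first by case: ifP.
have e : a * b * c * rho x y = a * (b * c * rho x y) by ring.
have [h1|h1] := eqVneq (b * c * rho x y) 0;
  have [h2|h2] := eqVneq (a * b) 0 => //=.
- by rewrite e h1 mulr0 eqxx.
- by rewrite -e h2 !mul0r eqxx.
by rewrite e.
Qed.

Lemma tscale_mulr (K : fieldType) (C : semigroupoid) (rho : C -> C -> K) a u v :
  tscale a (tmul rho u v) = tmul rho u (tscale a v).
Proof.
apply: dn_inj; rewrite dn_tscale !dn_tmul dn_tscale.
case: (dn_some u) => [->|[b [x [hb ->]]]] //.
case: (dn_some v) => [->|[c [y [hc ->]]]] //=.
have e : b * (a * c) * rho x y = a * (b * c * rho x y) by ring.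
have [h1|h1] := eqVneq (b * c * rho x y) 0;
  have [h2|h2] := eqVneq (a * c) 0 => //=.
- by rewrite e h1 mulr0 eqxx.
- by rewrite -e h2 mulr0 mul0r eqxx.
by rewrite e.
Qed.

Lemma tscale0 (K : fieldType) (C : Type) (u : E K C) : tscale 0 u = None.
Proof.
apply: dn_inj; rewrite !dn_tscale.
by case: (dn_some u) => [->|[c [x [hc ->]]]] //; rewrite mul0r eqxx.
Qed.

Definition TS (C : category) (K : fieldType) (rho : C -> C -> K)
  (ro : Out rho) (H : Hyp rho) : Ksemigroup K :=
  @KSemigroup K (E K C) (tmul rho) None (@tscale K C)
    (tmulA ro H) (fun _ => erefl) (fun u => match u with Some _ => erefl | None => erefl end)
    (@tscaleA K C) (@tscale1 K C) (@tscale_mull K C rho) (@tscale_mulr K C rho)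
    (@tscale0 K C).

Lemma canc_TS (C : category) (K : fieldType) (rho : C -> C -> K)
  (ro : Out rho) (H : Hyp rho) : Kcancellative (TS ro H).
Proof.
move=> a b u hu /(congr1 (@dn K C)) /=; rewrite !dn_tscale.
case: (dn_some u) => [/dn_none //|[c [x [hc ->]]]].
have [h1|h1] := eqVneq (a * c) 0; have [h2|h2] := eqVneq (b * c) 0 => //= e.
- by apply: (mulIf hc); rewrite h1 h2.
by case: e => e; apply: (mulIf hc).
Qed.

Definition Gm (C : category) (K : fieldType) (rho : C -> C -> K) (x : C) : E K C :=
  mk (if rho (cr x) x == 0 then 0 else 1) x.

Lemma dn_G (C : category) (K : fieldType) (rho : C -> C -> K) (x : C) :
  dn (Gm rho x) = if rho (cr x) x == 0 then None else Some (1, x).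
Proof. rewrite /Gm dn_mk; by case: (rho (cr x) x == 0); rewrite ?eqxx ?oner_eq0. Qed.

Lemma nz_e (C : category) (K : fieldType) (rho : C -> C -> K)
  (H : Hyp rho) (x y : C) :
  sdef x y -> rho x y != 0 -> rho (cr x) x != 0 /\ rho (cr y) y != 0.
Proof.
move=> hxy hne.
have [c1 _] := H (cr x) x y (cr_def x) hxy.
rewrite ((cr_id x) x).1 in c1; last exact: cr_def.
have [_ c3] := H x y (cd y) hxy (cd_def y).
have n3 : rho (cr x) (smul x y) != 0 by apply/eqP => /c3.2 /eqP; rewrite (negbTE hne).
have nx : rho (cr x) x != 0.
  apply/eqP => h0; move: c1; rewrite h0 mul0r => /esym /eqP.
  by rewrite mulf_eq0 (negbTE n3) (negbTE hne).
split=> //.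
have hxr : sdef x (cr y).
  apply: (chain2 (cr_def y)); rewrite ((cr_id y) y).1 //; exact: cr_def.
have [c4 c5] := H x (cr y) y hxr (cr_def y).
rewrite ((cr_id y) x).2 // ((cr_id y) y).1 in c4; last exact: cr_def.
rewrite ((cr_id y) x).2 // in c5.
have n5 : rho x (cr y) != 0 by apply/eqP => /c5.1 /eqP; rewrite (negbTE nx).
apply/eqP => h0; move: c4; rewrite h0 mulr0 => /eqP.
by rewrite mulf_eq0 (negbTE n5) (negbTE hne).
Qed.

Lemma Gzero (C : category) (K : fieldType) (rho : C -> C -> K)
  (H : Hyp rho) (x y : C) :
  sdef x y -> (rho (cr (smul x y)) (smul x y) = 0 <-> rho x y = 0).
Proof.
move=> hxy; rewrite cr_mulE //.
have [_ c3] := H x y (cd y) hxy (cd_def y).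
by split=> h; [apply/c3.2 | apply/c3.1].
Qed.

Lemma G_nz (C : category) (K : fieldType) (rho : C -> C -> K)
  (ro : Out rho) (H : Hyp rho) (x y : C) :
  rho x y != 0 -> rho (cr (smul x y)) (smul x y) != 0.
Proof.
move=> hne; have hxy := def_of_nz ro hne.
by apply/eqP => /(Gzero H hxy).1 /eqP; rewrite (negbTE hne).
Qed.

Lemma GG (C : category) (K : fieldType) (rho : C -> C -> K)
  (ro : Out rho) (H : Hyp rho) (x y : C) :
  tmul rho (Gm rho x) (Gm rho y) = tscale (rho x y) (Gm rho (smul x y)).
Proof.
apply: dn_inj; rewrite dn_tmul dn_tscale !dn_G.
have [h0|hne] := eqVneq (rho x y) 0.
  rewrite h0.
  by case: (rho (cr x) x == 0); case: (rho (cr y) y == 0); case: (rho (cr (smul x y)) (smul x y) == 0) => /=; rewrite ?h0 ?mulr0 ?mul0r ?eqxx.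
have hxy := def_of_nz ro hne.
have [n1 n2] := nz_e H hxy hne.
rewrite (negbTE n1) (negbTE n2) (negbTE (G_nz ro H hne)) /= !mul1r mulr1.
by rewrite (negbTE hne).
Qed.

Lemma fsG (C : category) (K : fieldType) (rho : C -> C -> K)
  (ro : Out rho) (H : Hyp rho) : factor_set_of (S := TS ro H) (Gm rho) rho.
Proof.
move=> x y; split.
  move=> [hxy hG]; have hne : rho x y != 0.
    apply/eqP => h0; apply: hG; apply: dn_none.
    by rewrite dn_G ((Gzero H hxy).2 h0) eqxx.
  split=> //; exact: GG.
move=> hn; have [//|hne] := eqVneq (rho x y) 0.
exfalso; apply: hn; split; first exact: (def_of_nz ro hne).
move/(congr1 (@dn K C)) => /=; by rewrite dn_G (negbTE (G_nz ro H hne)).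
Qed.

Lemma bwd (C : category) (K : fieldType) (rho : C -> C -> K)
  (ro : Out rho) (H : Hyp rho) : is_factor_set rho.
Proof.
exists (TS ro H), (Gm rho); split; first exact: canc_TS.
split; last exact: fsG.
split.
  move=> x y hxy.
  change (Gm rho (smul x y) = None <-> tmul rho (Gm rho x) (Gm rho y) = None).
  rewrite GG //.
  have [h0|hne] := eqVneq (rho x y) 0.
    rewrite h0 tscale0; split=> // _; apply: dn_none.
    by rewrite dn_G ((Gzero H hxy).2 h0) eqxx.
  split=> /(congr1 (@dn K C)) /=; rewrite ?dn_tscale dn_G (negbTE (G_nz ro H hne)) //=.
  by rewrite mulr1 (negbTE hne).
split.
  move=> x y hn.
  change (tmul rho (Gm rho x) (Gm rho y) = None).
  by rewrite GG // ro // tscale0.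
exists rho => x y hxy hG; exact: ((fsG ro H) x y).1.
Qed.

Theorem mainTheorem5 (C : category) (K : fieldType) (rho : C -> C -> K)
  (rho_out : forall x y : C, ~ sdef x y -> rho x y = 0) :
  is_factor_set rho <->
  (forall x y z : C, sdef x y -> sdef y z ->
     rho x y * rho (smul x y) z = rho x (smul y z) * rho y z
     /\ (rho x y = 0 <-> rho (cr x) (smul x y) = 0)).
Proof.
split; first exact: fwd.
move=> H; exact: (bwd rho_out H).
Qed.
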